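(* Let $A$ be an eNTA. The language $\mathfrak L(A)$ is suffix-periodic: there exist $t_{per}>0$ and an integer $L>0$ with the following property. Suppose $$\lambda=(t_1,a_1),\dots,(t_{r-1},a_{r-1}),(t_r,a_r),(t_{r+1},a_{r+1}),\dots,(t_{r+m},a_{r+m})$$ is an observable timed trace in $\mathfrak L(A)$ with $t_r>t_{per}$, and let $K\in L\mathbb Z$ satisfy $t_r+K>t_{per}$. Then there exists an observable timed trace $\lambda'\in\mathfrak L(A)$ of the form $$\lambda'=(t_1',a_1'),\dots,(t_s',a_s'),(t_r+K,a_r),(t_{r+1}+K,a_{r+1}),\dots,(t_{r+m}+K,a_{r+m})$$ for some $s\ge0$, times $t_j'$ and actions $a_j'\in\Sigma$.
   Context: **Automata.** An eNTA (non-deterministic timed automaton with silent transitions) is a tuple $A=(\mathcal Q,q_0,\Sigma_\epsilon,\mathcal C,\mathcal T)$ with the following components. - $\mathcal Q$ is a finite set of locations and $q_0$ is the initial location. - $\Sigma$ is a finite set of observable actions, and $\Sigma_\epsilon=\Sigma\cup\{\epsilon\}$, where $\epsilon$ is silent. - $\mathcal C$ is a finite set of clocks. - $\mathcal T$ is a finite set of transitions $(q,a,g,\mathcal C_{rst},q')$ with $a\in\Sigma_\epsilon$, $\mathcal C_{rst}\subseteq\mathcal C$ the clocks reset, and guard $g$ a finite conjunction of constraints $c\sim n$, where $\sim\in\{<,\le,=,\ge,>\}$ and $n\in\mathbb N_0$. **Runs.** A run is a finite sequence $$(q_0,\mathbf 0)\xrightarrow{d_1}(q_0,d_1)\xrightarrow{\tau_1}(q_1,v_1)\xrightarrow{d_2}\cdots\xrightarrow{\tau_k}(q_k,v_k),$$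 where $d_i\ge0$, $\tau_i=(q_{i-1},a_i,g_i,\mathcal C_i,q_i)\in\mathcal T$, $v_0=\mathbf 0$, $v_{i-1}+d_i\models g_i$, and $v_i$ equals $v_{i-1}+d_i$ with the clocks of $\mathcal C_i$ set to $0$. **Traces and language.** The timed trace of a run is $(t_1,a_1),\dots,(t_k,a_k)$ with $t_i=d_1+\dots+d_i$. The observable timed trace is obtained by deleting all pairs with $a_i=\epsilon$. The language $\mathfrak L(A)$ is the set of observable timed traces of all runs of $A$ (all locations are accepting). *)

(* Defs.v *)
From Stdlib Require Import Reals List ZArith.
Open Scope R_scope.

Inductive cmp := CLt | CLe | CEq | CGe | CGt.

Definition cmp_sat (c : cmp) (x y : R) : Prop :=
  match c with
  | CLt => x < y | CLe => x <= y | CEq => x = y | CGe => x >= y | CGt => x > y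
  end.

Definition clock := nat.
Definition constr : Type := (clock * cmp * nat)%type.
Definition guard := list constr.
Definition valuation := clock -> R.

Definition guard_sat (g : guard) (v : valuation) : Prop :=
  Forall (fun k => match k with (c, o, n) => cmp_sat o (v c) (INR n) end) g.

(* Transition (q, a, g, C_rst, q'); a = None is the silent action epsilon. *)
Record transition (Loc Sigma : Type) := mkTrans {
  t_src : Loc; t_act : option Sigma; t_guard : guard;
  t_reset : list clock; t_dst : Loc }.
Arguments t_src {Loc Sigma}. Arguments t_act {Loc Sigma}.
Arguments t_guard {Loc Sigma}. Arguments t_reset {Loc Sigma}.
Arguments t_dst {Loc Sigma}.

Record eNTA (Sigma : Type) := mkENTA {
  Loc : Type;
  locs : list Loc;
  q0 : Loc;
  q0_in : In q0 locs;
  alphabet : list Sigma;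
  clocks : list clock;
  trans : list (transition Loc Sigma);
  trans_wf : forall tr, In tr trans ->
    In (t_src tr) locs /\ In (t_dst tr) locs /\
    (forall a, t_act tr = Some a -> In a alphabet) /\
    (forall k, In k (t_guard tr) -> In (fst (fst k)) clocks) /\
    (forall c, In c (t_reset tr) -> In c clocks) }.
Arguments Loc {Sigma}. Arguments q0 {Sigma}. Arguments trans {Sigma}.

Definition reset (rs : list clock) (v : valuation) : valuation :=
  fun c => if in_dec Nat.eq_dec c rs then 0 else v c.

Definition delay (v : valuation) (d : R) : valuation := fun c => v c + d.

Fixpoint run_ok {Sigma} (A : eNTA Sigma) (q : Loc A) (v : valuation)
    (steps : list (R * transition (Loc A) Sigma)) : Prop :=
  match steps with
  | nil => True
  | (d, tr) :: rest =>
      0 <= d /\ In tr (trans A) /\ t_src tr = q /\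
      guard_sat (t_guard tr) (delay v d) /\
      run_ok A (t_dst tr) (reset (t_reset tr) (delay v d)) rest
  end.

Fixpoint obs_trace {L Sigma} (t : R) (steps : list (R * transition L Sigma))
    : list (R * Sigma) :=
  match steps with
  | nil => nil
  | (d, tr) :: rest =>
      match t_act tr with
      | Some a => (t + d, a) :: obs_trace (t + d) rest
      | None => obs_trace (t + d) rest
      end
  end.

Definition in_lang {Sigma} (A : eNTA Sigma) (lam : list (R * Sigma)) : Prop :=
  exists steps, run_ok A (q0 A) (fun _ => 0) steps /\ obs_trace 0 steps = lam.

Definition shift_trace {Sigma} (K : R) (s : list (R * Sigma)) : list (R * Sigma) :=
  map (fun p => (fst p + K, snd p)) s.

(* Main.v *)
Require Import Defs.
From Stdlib Require Import Reals List ZArith.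
From Stdlib Require Import Lra Lia Classical ClassicalEpsilon FunctionalExtensionality FinFun.
Open Scope R_scope.

Module P1.

Section S.
Variable Sigma : Type.
Variable A : eNTA Sigma.

Definition C := clocks Sigma A.
Definition TT := trans A.
Definition LL := Loc A.

Definition Mn : nat :=
  fold_right Nat.max 0%nat
    (flat_map (fun tr => map (fun k : constr => snd k) (t_guard tr)) TT).
Definition MR := INR Mn.

Lemma fold_max_ub : forall l x, In x l -> (x <= fold_right Nat.max 0 l)%nat.
Proof. induction l; simpl; intros x H; [tauto|]. destruct H; subst; lia || (specialize (IHl _ H); lia). Qed.

Lemma guard_bound : forall tr k, In tr TT -> In k (t_guard tr) -> (snd k <= Mn)%nat /\ In (fst (fst k)) C.
Proof.
  intros tr k Htr Hk. split.
  - apply fold_max_ub. apply in_flat_map. exists tr. split; auto. apply in_map; auto.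
  - destruct (trans_wf Sigma A tr Htr) as (_&_&_&H&_). apply H; auto.
Qed.

Definition E (v w : valuation) : Prop :=
  forall c, In c C -> v c = w c \/ (v c > MR /\ w c > MR).

Lemma E_delay : forall v w d, 0 <= d -> E v w -> E (delay v d) (delay w d).
Proof. unfold E, delay; intros v w d Hd H c Hc. destruct (H c Hc); [left; lra | right; lra]. Qed.

Lemma E_reset : forall rs v w, E v w -> E (reset rs v) (reset rs w).
Proof. unfold E, reset; intros rs v w H c Hc. destruct (in_dec Nat.eq_dec c rs); auto. Qed.

Lemma E_trans : forall u v w, E u v -> E v w -> E u w.
Proof. unfold E; intros u v w H1 H2 c Hc. destruct (H1 c Hc), (H2 c Hc); try (left; congruence); right; lra. Qed.

Lemma cmp_big : forall o x y n, x > INR n -> y > INR n -> (cmp_sat o x (INR n) <-> cmp_sat o y (INR n)).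
Proof. intros o x y n Hx Hy; destruct o; simpl; split; intro; lra. Qed.

Lemma guard_E : forall tr v w, In tr TT -> E v w -> guard_sat (t_guard tr) w -> guard_sat (t_guard tr) v.
Proof.
  intros tr v w Htr HE Hg. unfold guard_sat in *. rewrite Forall_forall in *.
  intros [[c o] n] Hk. specialize (Hg _ Hk). simpl in Hg.
  destruct (guard_bound tr _ Htr Hk) as [Hn Hc]. simpl in Hn, Hc.
  destruct (HE c Hc) as [Heq|[H1 H2]]. rewrite Heq; auto.
  apply le_INR in Hn. unfold MR in *.
  apply (cmp_big o (v c) (w c) n); auto; lra.
Qed.

Lemma run_E : forall steps q v w, E v w -> run_ok A q w steps -> run_ok A q v steps.
Proof.
  induction steps as [|[d tr] rest IH]; simpl; auto.
  intros q v w HE (Hd & Hin & Hs & Hg & Hr). repeat split; auto.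
  - apply (guard_E tr _ (delay w d)); auto. apply E_delay; auto.
  - apply (IH _ _ (reset (t_reset tr) (delay w d))); auto. apply E_reset, E_delay; auto.
Qed.

Inductive RF : LL -> valuation -> R -> LL -> valuation -> R -> Prop :=
| RF_delay : forall q v t d v' t', 0 <= d -> t' = t + d -> v' = delay v d -> RF q v t q v' t'
| RF_step : forall q v t tr v' q', In tr TT -> t_src tr = q -> guard_sat (t_guard tr) v ->
    v' = reset (t_reset tr) v -> q' = t_dst tr -> RF q v t q' v' t
| RF_trans : forall q1 v1 t1 q2 v2 t2 q3 v3 t3, RF q1 v1 t1 q2 v2 t2 -> RF q2 v2 t2 q3 v3 t3 ->
    RF q1 v1 t1 q3 v3 t3.

Lemma delay0 : forall v, delay v 0 = v.
Proof. intros; apply functional_extensionality; intro; unfold delay; ring. Qed.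

Lemma RF_refl : forall q v t, RF q v t q v t.
Proof. intros. apply RF_delay with 0. lra. ring. symmetry; apply delay0. Qed.

Lemma RF_mono : forall q v t q' v' t', RF q v t q' v' t' -> t <= t'.
Proof. induction 1; lra. Qed.

Lemma RF_E : forall q v t q' v' t', RF q v t q' v' t' -> forall w s, E w v ->
  exists w', RF q w (t + s) q' w' (t' + s) /\ E w' v'.
Proof.
  induction 1; intros w s HE.
  - exists (delay w d). subst. split. apply RF_delay with d; auto; ring. apply E_delay; auto.
  - exists (reset (t_reset tr) w). split. eapply RF_step; eauto. eapply guard_E; eauto.
    subst; apply E_reset; auto.
  - destruct (IHRF1 w s HE) as (w2 & H1 & H2). destruct (IHRF2 w2 s H2) as (w3 & H3 & H4).
    exists w3; split; auto. eapply RF_trans; eauto.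
Qed.

Lemma RF_split : forall q v t q' v' t', RF q v t q' v' t' -> forall m, t <= m <= t' ->
  exists q'' v'', RF q v t q'' v'' m /\ RF q'' v'' m q' v' t'.
Proof.
  induction 1; intros m Hm.
  - exists q, (delay v (m - t)). split. apply RF_delay with (m - t); auto; lra.
    apply RF_delay with (t + d - m); try lra. subst. apply functional_extensionality; intro; unfold delay; ring.
  - assert (m = t) by lra. subst m. exists q, v. split. apply RF_refl. eapply RF_step; eauto.
  - pose proof (RF_mono _ _ _ _ _ _ H). pose proof (RF_mono _ _ _ _ _ _ H0).
    destruct (Rle_dec m t2).
    + destruct (IHRF1 m) as (q'' & v'' & Ha & Hb). lra. exists q'', v''. split; auto. eapply RF_trans; eauto.
    + destruct (IHRF2 m) as (q'' & v'' & Ha & Hb). lra. exists q'', v''. split; auto. eapply RF_trans; eauto.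
Qed.

Fixpoint dur (s : list (R * transition LL Sigma)) : R :=
  match s with nil => 0 | (d, _) :: r => d + dur r end.

Lemma obs_shift : forall (s : list (R * transition LL Sigma)) t K, obs_trace (t + K) s = shift_trace K (obs_trace t s).
Proof.
  induction s as [|[d tr] r IH]; intros t K; simpl; auto.
  replace (t + K + d) with ((t + d) + K) by ring.
  destruct (t_act tr); simpl; rewrite IH; auto.
Qed.

Lemma RF_run : forall q v t q' v' t', RF q v t q' v' t' -> forall rest, run_ok A q' v' rest ->
  exists steps pre, run_ok A q v steps /\ obs_trace t steps = pre ++ obs_trace t' rest.
Proof.
  induction 1; intros rest Hr.
  - destruct rest as [|[d1 tr] r0].
    + exists nil, nil. simpl. auto.
    + exists ((d + d1, tr) :: r0), nil. subst. simpl in Hr |- *.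
      destruct Hr as (Hd1 & Hin & Hs & Hg & Hr).
      assert (Hdd : delay (delay v d) d1 = delay v (d + d1)).
      { apply functional_extensionality; intro; unfold delay; ring. }
      rewrite Hdd in *. repeat split; auto; try lra.
      replace (t + (d + d1)) with (t + d + d1) by ring. auto.
  - subst. exists ((0, tr) :: rest). simpl. rewrite delay0. rewrite Rplus_0_r.
    destruct (t_act tr) as [a|].
    + exists ((t, a) :: nil). repeat split; auto; lra.
    + exists nil. repeat split; auto; lra.
  - destruct (IHRF2 rest Hr) as (s2 & p2 & H1 & H2).
    destruct (IHRF1 s2 H1) as (s1 & p1 & H3 & H4).
    exists s1, (p1 ++ p2). split; auto. rewrite H4, H2, app_assoc; auto.
Qed.

Lemma run_cut : forall tr ar suf steps q v t pre N, run_ok A q v steps ->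
  obs_trace t steps = pre ++ (tr, ar) :: suf -> t <= N <= tr ->
  exists q' v' rest mid, RF q v t q' v' N /\ run_ok A q' v' rest /\
     obs_trace N rest = mid ++ (tr, ar) :: suf.
Proof.
  intros tr ar suf. induction steps as [|[d tau] r IH]; intros q v t pre N Hrun Hobs HN.
  - simpl in Hobs. destruct pre; discriminate.
  - simpl in Hrun. destruct Hrun as (Hd & Hin & Hs & Hg & Hr).
    destruct (Rle_dec N (t + d)).
    + exists q, (delay v (N - t)), ((t + d - N, tau) :: r), pre. split.
      apply RF_delay with (N - t); auto; lra.
      assert (Hdd : delay (delay v (N - t)) (t + d - N) = delay v d).
      { apply functional_extensionality; intro; unfold delay; ring. }
      split. simpl. rewrite Hdd. repeat split; auto; lra.
      rewrite <- Hobs. simpl. replace (N + (t + d - N)) with (t + d) by ring. auto.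
    + simpl in Hobs.
      assert (Hx : exists pre', obs_trace (t + d) r = pre' ++ (tr, ar) :: suf).
      { destruct (t_act tau) as [a|].
        - destruct pre as [|x pre0]; simpl in Hobs; inversion Hobs; subst.
          + lra.
          + exists pre0; auto.
        - exists pre; auto. }
      destruct Hx as [pre' Hpre'].
      destruct (IH _ _ _ _ N Hr Hpre') as (q' & v' & rest & mid & H1 & H2 & H3). lra.
      exists q', v', rest, mid. repeat split; auto.
      eapply RF_trans; [|apply H1].
      eapply RF_trans. apply RF_delay with (d := d); auto.
      eapply RF_step; eauto.
Qed.

Lemma RF_nonneg : forall q v t q' v' t', RF q v t q' v' t' -> In q (locs Sigma A) -> (forall c, 0 <= v c) ->
   In q' (locs Sigma A) /\ forall c, 0 <= v' c.
Proof.
  induction 1; intros Hq Hv.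
  - subst; split; auto. intro c; unfold delay; specialize (Hv c); lra.
  - subst. split. destruct (trans_wf Sigma A tr H) as (_&Hd&_); auto.
    intro c; unfold reset; destruct (in_dec Nat.eq_dec c (t_reset tr)); auto; lra.
  - destruct (IHRF1 Hq Hv); auto.
Qed.

End S.

End P1.
Import P1.

Definition fl (s : R) : Z := (up s - 1)%Z.
Definition fr (s : R) : R := s - IZR (fl s).

Lemma fl_spec : forall s, IZR (fl s) <= s < IZR (fl s) + 1.
Proof. intros s. unfold fl. rewrite minus_IZR. destruct (archimed s). simpl. lra. Qed.

Lemma fl_unique : forall s z, IZR z <= s < IZR z + 1 -> fl s = z.
Proof.
  intros s z [H1 H2]. unfold fl. assert (z + 1 = up s)%Z.
  { apply tech_up; rewrite plus_IZR; simpl; lra. } lia.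
Qed.

Lemma fr_range : forall s, 0 <= fr s < 1.
Proof. intros; unfold fr; pose proof (fl_spec s); lra. Qed.

Lemma fl_add : forall s m, fl (s + IZR m) = (fl s + m)%Z.
Proof. intros. apply fl_unique. rewrite plus_IZR. pose proof (fl_spec s); lra. Qed.

Lemma fl_mono : forall s t, s <= t -> (fl s <= fl t)%Z.
Proof.
  intros s t H. destruct (Z_le_gt_dec (fl s) (fl t)); auto.
  assert (fl t + 1 <= fl s)%Z by lia. apply IZR_le in H0. rewrite plus_IZR in H0.
  pose proof (fl_spec s); pose proof (fl_spec t). simpl in H0. lra.
Qed.

Definition Gf (P : list (R * R)) (s : R) : R :=
  fold_right (fun p acc => if Rle_dec (fst p) s then Rmax (snd p) acc else acc) 0 P.
Definition Hf (P : list (R * R)) (s : R) : R :=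
  fold_right (fun p acc => if Rle_dec s (fst p) then Rmin (snd p) acc else acc) 1 P.

Lemma G_ge0 : forall P s, 0 <= Gf P s.
Proof. induction P; simpl; intros; try lra. destruct Rle_dec; auto. specialize (IHP s).
  eapply Rle_trans; [|apply Rmax_r]; auto. Qed.

Lemma G_ub : forall P s p, In p P -> fst p <= s -> snd p <= Gf P s.
Proof. induction P; simpl; intros s p Hp Hs; [tauto|]. destruct Hp; subst.
  - destruct Rle_dec; [apply Rmax_l|contradiction].
  - destruct Rle_dec; auto. eapply Rle_trans; [|apply Rmax_r]; eauto. Qed.

Lemma G_att : forall P s, Gf P s = 0 \/ exists p, In p P /\ fst p <= s /\ snd p = Gf P s.
Proof. induction P; simpl; intros; auto. destruct Rle_dec.
  - unfold Rmax. destruct Rle_dec.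
    + destruct (IHP s) as [H|(p&H1&H2&H3)]; auto. right; exists p; auto.
    + right; exists a; auto.
  - destruct (IHP s) as [H|(p&H1&H2&H3)]; auto. right; exists p; auto. Qed.

Lemma H_le1 : forall P s, Hf P s <= 1.
Proof. induction P; simpl; intros; try lra. destruct Rle_dec; auto. specialize (IHP s).
  eapply Rle_trans; [apply Rmin_r|]; auto. Qed.

Lemma H_lb : forall P s p, In p P -> s <= fst p -> Hf P s <= snd p.
Proof. induction P; simpl; intros s p Hp Hs; [tauto|]. destruct Hp; subst.
  - destruct Rle_dec; [apply Rmin_l|contradiction].
  - destruct Rle_dec; auto. eapply Rle_trans; [apply Rmin_r|]; eauto. Qed.

Lemma H_att : forall P s, Hf P s = 1 \/ exists p, In p P /\ s <= fst p /\ snd p = Hf P s.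
Proof. induction P; simpl; intros; auto. destruct Rle_dec.
  - unfold Rmin. destruct Rle_dec.
    + right; exists a; auto.
    + destruct (IHP s) as [H|(p&H1&H2&H3)]; auto. right; exists p; auto.
  - destruct (IHP s) as [H|(p&H1&H2&H3)]; auto. right; exists p; auto. Qed.

Lemma H_mono : forall P s t, s <= t -> Hf P s <= Hf P t.
Proof. induction P; simpl; intros s t H; try lra. specialize (IHP s t H).
  destruct (Rle_dec t (fst a)), (Rle_dec s (fst a)); try lra.
  - unfold Rmin; repeat destruct Rle_dec; lra.
  - eapply Rle_trans; [apply Rmin_r|]; auto. Qed.

Lemma G_ext : forall P s t, (forall p, In p P -> (fst p <= s <-> fst p <= t)) -> Gf P s = Gf P t.
Proof. induction P; simpl; intros s t H; auto.
  rewrite (IHP s t) by (intros; apply H; auto).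
  destruct (H a (or_introl eq_refl)).
  destruct (Rle_dec (fst a) s), (Rle_dec (fst a) t); tauto. Qed.

Section Phi.
Variable P : list (R * R).
Hypothesis Hrng : forall p, In p P -> 0 <= fst p < 1 /\ 0 <= snd p < 1 /\ (fst p = 0 <-> snd p = 0).
Hypothesis Hiso : forall p q, In p P -> In q P -> (fst p < fst q <-> snd p < snd q).

Definition phi s := Gf P s + s * (Hf P s - Gf P s).

Lemma G_lt1 : forall s, Gf P s < 1.
Proof. intro s. destruct (G_att P s) as [H|(p&H1&H2&H3)]. lra. rewrite <- H3. apply Hrng; auto. Qed.

Lemma G_lt_snd : forall s p, 0 <= s -> In p P -> s < fst p -> Gf P s < snd p.
Proof.
  intros s p Hs Hp Hlt. destruct (Hrng p Hp) as (H1&H2&H3).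
  destruct (G_att P s) as [H|(q&Hq1&Hq2&Hq3)].
  - rewrite H. destruct H2 as [H2 _]. destruct (Rle_lt_or_eq_dec _ _ H2); auto.
    exfalso. assert (fst p = 0) by (apply H3; auto). lra.
  - rewrite <- Hq3. apply (Hiso q p); auto. lra.
Qed.

Lemma G_le_H : forall s, 0 <= s -> Gf P s <= Hf P s.
Proof.
  intros s Hs. destruct (G_att P s) as [H|(q&Hq1&Hq2&Hq3)].
  - rewrite H. destruct (H_att P s) as [H'|(p&Hp1&Hp2&Hp3)]. lra. rewrite <- Hp3; apply Hrng; auto.
  - rewrite <- Hq3. destruct (H_att P s) as [H'|(p&Hp1&Hp2&Hp3)].
    + rewrite H'. left; apply Hrng; auto.
    + rewrite <- Hp3. destruct (Rle_dec (snd q) (snd p)); auto.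
      exfalso. assert (fst p < fst q) by (apply (Hiso p q); auto; lra). lra.
Qed.

Lemma G_lt_H : forall t, 0 <= t -> (forall p, In p P -> fst p <> t) -> Gf P t < Hf P t.
Proof.
  intros t Ht Hn. destruct (H_att P t) as [H'|(p&Hp1&Hp2&Hp3)].
  - rewrite H'; apply G_lt1.
  - rewrite <- Hp3. apply G_lt_snd; auto. specialize (Hn p Hp1). lra.
Qed.

Lemma phi_pt : forall p, In p P -> phi (fst p) = snd p.
Proof.
  intros p Hp. assert (HG : Gf P (fst p) = snd p).
  { apply Rle_antisym; [|apply G_ub; auto; lra].
    destruct (G_att P (fst p)) as [H|(q&Hq1&Hq2&Hq3)].
    - rewrite H; apply Hrng; auto.
    - rewrite <- Hq3. destruct (Rle_dec (snd q) (snd p)); auto.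
      exfalso. assert (fst p < fst q) by (apply (Hiso p q); auto; lra). lra. }
  assert (HH : Hf P (fst p) = snd p).
  { apply Rle_antisym; [apply H_lb; auto; lra|].
    destruct (H_att P (fst p)) as [H|(q&Hq1&Hq2&Hq3)].
    - rewrite H; left; apply Hrng; auto.
    - rewrite <- Hq3. destruct (Rle_dec (snd p) (snd q)); auto.
      exfalso. assert (fst q < fst p) by (apply (Hiso q p); auto; lra). lra. }
  unfold phi. rewrite HG, HH. ring.
Qed.

Lemma phi0 : phi 0 = 0.
Proof.
  unfold phi. assert (Gf P 0 = 0).
  { destruct (G_att P 0) as [H|(q&Hq1&Hq2&Hq3)]; auto. rewrite <- Hq3.
    destruct (Hrng q Hq1) as (H1&H2&H3). apply H3. lra. }
  rewrite H; ring.
Qed.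

Lemma phi_rng : forall s, 0 <= s < 1 -> 0 <= phi s < 1.
Proof.
  intros s Hs. unfold phi. pose proof (G_ge0 P s). pose proof (G_le_H s (proj1 Hs)).
  pose proof (G_lt1 s). pose proof (H_le1 P s). split; nra.
Qed.

Lemma phi_mono : forall s t, 0 <= s -> s < t -> t < 1 -> phi s < phi t.
Proof.
  intros s t Hs Hst Ht. unfold phi.
  destruct (classic (exists p, In p P /\ s < fst p <= t)) as [(p&Hp&H1&H2)|Hn].
  - pose proof (G_lt_snd s p Hs Hp H1). pose proof (H_lb P s p Hp (Rlt_le _ _ H1)).
    pose proof (G_ub P t p Hp H2). pose proof (G_le_H t ltac:(lra)).
    assert (Gf P s + s * (Hf P s - Gf P s) < snd p).
    { replace (Gf P s + s * (Hf P s - Gf P s)) with ((1 - s) * Gf P s + s * Hf P s) by ring.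
      apply Rlt_le_trans with ((1 - s) * snd p + s * snd p); [|lra].
      apply Rplus_lt_le_compat. apply Rmult_lt_compat_l; lra. apply Rmult_le_compat_l; lra. }
    nra.
  - assert (HG : Gf P s = Gf P t).
    { apply G_ext. intros p Hp. split; intro; try lra.
      destruct (Rle_dec (fst p) s); auto. exfalso; apply Hn; exists p; split; auto; lra. }
    assert (Hlt : Gf P t < Hf P t).
    { apply G_lt_H; try lra. intros p Hp Heq. apply Hn. exists p; split; auto; lra. }
    pose proof (H_mono P s t (Rlt_le _ _ Hst)).
    pose proof (G_le_H s Hs).
    rewrite HG in *. nra.
Qed.

End Phi.

Definition goodpsi (psi : R -> R) : Prop :=
  (forall s t, s < t -> psi s < psi t) /\ (forall s m, psi (s + IZR m) = psi s + IZR m) /\ psi 0 = 0.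

Lemma psi_exists : forall P : list (R * R),
  (forall p, In p P -> 0 <= fst p < 1 /\ 0 <= snd p < 1 /\ (fst p = 0 <-> snd p = 0)) ->
  (forall p q, In p P -> In q P -> (fst p < fst q <-> snd p < snd q)) ->
  exists psi, goodpsi psi /\ forall p, In p P -> forall z, psi (IZR z + fst p) = IZR z + snd p.
Proof.
  intros P Hr Hi. exists (fun s => IZR (fl s) + phi P (fr s)). split; [split; [|split]|].
  - intros s t Hst. pose proof (fl_mono s t (Rlt_le _ _ Hst)).
    pose proof (fr_range s). pose proof (fr_range t).
    pose proof (phi_rng P Hr Hi (fr s) H0). pose proof (phi_rng P Hr Hi (fr t) H1).
    destruct (Z.eq_dec (fl s) (fl t)).
    + rewrite e. apply Rplus_lt_compat_l. apply phi_mono; auto; try lra.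
      unfold fr; rewrite e; lra.
    + assert (fl s + 1 <= fl t)%Z by lia. apply IZR_le in H4. rewrite plus_IZR in H4. simpl in H4. lra.
  - intros s m. rewrite fl_add. unfold fr. rewrite fl_add. rewrite plus_IZR.
    replace (s + IZR m - (IZR (fl s) + IZR m)) with (s - IZR (fl s)) by ring. ring.
  - replace (fl 0) with 0%Z. unfold fr. replace (fl 0) with 0%Z. simpl.
    replace (0 - 0) with 0 by ring. rewrite phi0; auto. ring.
    symmetry; apply fl_unique; simpl; lra. symmetry; apply fl_unique; simpl; lra.
  - intros p Hp z. destruct (Hr p Hp) as (H1&H2&H3).
    assert (fl (IZR z + fst p) = z) by (apply fl_unique; lra). rewrite H.
    unfold fr. rewrite H. replace (IZR z + fst p - IZR z) with (fst p) by ring.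
    rewrite phi_pt; auto.
Qed.


Section S3.
Variable psi : R -> R.
Hypothesis Hpsi : goodpsi psi.

Lemma psi_lt : forall s t, psi s < psi t <-> s < t.
Proof. destruct Hpsi as (H1&_&_). intros; split; auto. intro H.
  destruct (total_order_T s t) as [[?|?]|?]; auto. subst; lra. specialize (H1 _ _ r); lra. Qed.

Lemma psi_eq : forall s t, psi s = psi t <-> s = t.
Proof. intros; split; [|intros; subst; auto]. intro H.
  destruct (total_order_T s t) as [[?|?]|?]; auto; [apply psi_lt in r|apply psi_lt in r]; lra. Qed.

Lemma psi_int : forall m, psi (IZR m) = IZR m.
Proof. destruct Hpsi as (_&H2&H3). intros m. rewrite <- (Rplus_0_l (IZR m)), H2, H3. auto. Qed.

Lemma psi_addn : forall a n, psi (a + INR n) = psi a + INR n.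
Proof. destruct Hpsi as (_&H2&_). intros. rewrite INR_IZR_INZ. apply H2. Qed.

Lemma cmp_psi : forall o x T n, cmp_sat o x (INR n) <-> cmp_sat o (psi T - psi (T - x)) (INR n).
Proof.
  intros o x T n.
  assert (Hl : psi T - psi (T - x) < INR n <-> x < INR n).
  { split; intro H.
    - assert (psi T < psi (T - x + INR n)) by (rewrite psi_addn; lra). rewrite psi_lt in H0. lra.
    - assert (T < T - x + INR n) by lra. apply (proj2 (psi_lt _ _)) in H0. rewrite psi_addn in H0; lra. }
  assert (Hg : INR n < psi T - psi (T - x) <-> INR n < x).
  { split; intro H.
    - assert (psi (T - x + INR n) < psi T) by (rewrite psi_addn; lra). rewrite psi_lt in H0; lra.
    - assert (T - x + INR n < T) by lra. apply (proj2 (psi_lt _ _)) in H0. rewrite psi_addn in H0; lra. }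
  assert (He : psi T - psi (T - x) = INR n <-> x = INR n).
  { split; intro H.
    - assert (psi T = psi (T - x + INR n)) by (rewrite psi_addn; lra). rewrite psi_eq in H0; lra.
    - assert (psi T = psi (T - x + INR n)) by (apply psi_eq; lra). rewrite psi_addn in H0; lra. }
  destruct o; simpl; unfold Rge, Rgt; unfold Rle; tauto.
Qed.

Definition Inv (t : R) (v v1 : valuation) := forall c, v1 c = psi t - psi (t - v c).

Lemma RF_retime : forall Sigma (A : eNTA Sigma) q v t q' v' t', RF Sigma A q v t q' v' t' -> forall u1, Inv t v u1 ->
  exists v1', RF Sigma A q u1 (psi t) q' v1' (psi t') /\ Inv t' v' v1'.
Proof.
  induction 1; intros u1 Hi.
  - exists (delay u1 (psi t' - psi t)). split.
    + apply RF_delay with (psi t' - psi t); auto; try ring.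
      destruct H. assert (psi t < psi t') by (apply (proj2 (psi_lt _ _)); lra). lra.
      subst. rewrite Rplus_0_r. lra.
    + intro c. unfold delay. rewrite Hi. subst. unfold delay.
      replace (t + d - (v c + d)) with (t - v c) by ring. ring.
  - exists (reset (t_reset tr) u1). split.
    + eapply RF_step; eauto. unfold guard_sat in *. rewrite Forall_forall in *.
      intros [[c o] n] Hk. specialize (H1 _ Hk). simpl in *. rewrite Hi. apply cmp_psi; auto.
    + intro c. subst. unfold reset. destruct in_dec; auto.
      replace (t - 0) with t by ring. ring.
  - destruct (IHRF1 u1 Hi) as (w & H1 & H2). destruct (IHRF2 w H2) as (w' & H3 & H4).
    exists w'; split; auto. eapply RF_trans; eauto.
Qed.

End S3.

Module P4.
Local Open Scope bool_scope.

Fixpoint all_lists {T} (n : nat) (l : list T) : list (list T) :=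
  match n with O => nil :: nil | S n => flat_map (fun x => map (cons x) (all_lists n l)) l end.

Lemma in_all_lists : forall {T} n (l x : list T), length x = n -> (forall e, In e x -> In e l) -> In x (all_lists n l).
Proof.
  intros T n; induction n; intros l x Hl Hx; destruct x; simpl in *; try discriminate; auto.
  apply in_flat_map. exists t. split; auto. apply in_map. apply IHn; auto.
Qed.

Lemma pigeon : forall {T} (f : nat -> T) (U : list T), (forall n, In (f n) U) -> exists i j, (i < j)%nat /\ f i = f j.
Proof.
  intros T f U HU. apply NNPP; intro Hn.
  assert (Hinj : forall i j, f i = f j -> i = j).
  { intros i j H. destruct (Nat.lt_total i j) as [?|[?|?]]; auto; exfalso; apply Hn; eauto. }
  assert (HN : NoDup (map f (seq 0 (S (length U))))).
  { apply Injective_map_NoDup; [exact Hinj|apply seq_NoDup]. }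
  apply NoDup_incl_length with (l' := U) in HN.
  - rewrite length_map, length_seq in HN. lia.
  - intros x Hx. apply in_map_iff in Hx. destruct Hx as (n & <- & _). auto.
Qed.

Lemma map_eq_in : forall {T U} (f g : T -> U) l x, map f l = map g l -> In x l -> f x = g x.
Proof. induction l; simpl; intros x H Hx; [tauto|]. inversion H. destruct Hx; subst; auto. Qed.

Lemma count_lt : forall {T} (P Q : T -> bool) l x, (forall e, P e = true -> Q e = true) -> In x l ->
  Q x = true -> P x = false -> (length (filter P l) < length (filter Q l))%nat.
Proof.
  induction l; simpl; intros x H Hx HQ HP; [tauto|].
  assert (Hle : forall l, (length (filter P l) <= length (filter Q l))%nat).
  { induction l0; simpl; auto. destruct (P a0) eqn:E1. rewrite (H _ E1). simpl; lia.
    destruct (Q a0); simpl; lia. }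
  destruct Hx; subst.
  - rewrite HP, HQ. simpl. specialize (Hle l). lia.
  - specialize (IHl x H H0 HQ HP). destruct (P a) eqn:E1. rewrite (H _ E1). simpl; lia.
    destruct (Q a); simpl; lia.
Qed.

Lemma count_le : forall {T} (P Q : T -> bool) l, (forall e, P e = true -> Q e = true) ->
  (length (filter P l) <= length (filter Q l))%nat.
Proof.
  induction l; simpl; intros H; auto. destruct (P a) eqn:E1. rewrite (H _ E1). simpl. specialize (IHl H); lia.
  destruct (Q a); simpl; specialize (IHl H); lia.
Qed.

Section S4.
Variable Sigma : Type.
Variable A : eNTA Sigma.
Notation C := (P1.C Sigma A).
Notation MR := (P1.MR Sigma A).
Notation LL := (P1.LL Sigma A).
Notation RF := (P1.RF Sigma A).
Notation E := (P1.E Sigma A).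
Definition v0 : valuation := fun _ => 0.
Definition Reach (t : R) q v := RF (q0 A) v0 0 q v t.

Definition finb (v : valuation) c : bool := if Rle_dec (v c) MR then true else false.
Definition ltb (x y : R) : bool := if Rlt_dec x y then true else false.
Definition rank (v : valuation) c : nat :=
  length (filter (fun d => finb v d && ltb (fr (- v d)) (fr (- v c))) C).
Definition info (v : valuation) c : option (Z * bool * nat) :=
  if Rle_dec (v c) MR then Some (fl (- v c), (if Req_EM_T (fr (- v c)) 0 then true else false), rank v c)
  else None.
Definition key (q : LL) v := (q, map (info v) C).

Definition sim (v w : valuation) : Prop :=
  forall c, In c C -> (v c <= MR <-> w c <= MR) /\
   (v c <= MR -> fl (- v c) = fl (- w c) /\ (fr (- v c) = 0 <-> fr (- w c) = 0) /\
      forall d, In d C -> v d <= MR -> (fr (- v c) < fr (- v d) <-> fr (- w c) < fr (- w d))).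

Lemma rank_lt : forall v c d, In c C -> v c <= MR -> v d <= MR ->
  (fr (- v c) < fr (- v d) <-> (rank v c < rank v d)%nat).
Proof.
  intros v c d Hc Hfc Hfd. unfold rank. split; intro H.
  - apply count_lt with c; auto.
    + intros e He. apply andb_prop in He. destruct He as [H1 H2]. rewrite H1. simpl.
      unfold ltb in *. destruct Rlt_dec; try discriminate. destruct Rlt_dec; auto. lra.
    + unfold finb, ltb. destruct Rle_dec; try lra. destruct Rlt_dec; auto; lra.
    + unfold ltb. destruct Rlt_dec; try lra; try apply andb_false_r.
  - destruct (Rlt_dec (fr (- v c)) (fr (- v d))); auto. exfalso.
    assert (length (filter (fun d0 => finb v d0 && ltb (fr (- v d0)) (fr (- v d))) C) <=
            length (filter (fun d0 => finb v d0 && ltb (fr (- v d0)) (fr (- v c))) C))%nat.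
    { apply count_le. intros e He. apply andb_prop in He. destruct He as [H1 H2]. rewrite H1. simpl.
      unfold ltb in *. destruct Rlt_dec; try discriminate. destruct Rlt_dec; auto. lra. }
    lia.
Qed.

Lemma key_sim : forall q v q' w, key q v = key q' w -> q = q' /\ sim v w.
Proof.
  intros q v q' w H. unfold key in H. inversion H. split; auto.
  intros c Hc. pose proof (map_eq_in _ _ _ c H2 Hc) as Hi. unfold info in Hi.
  destruct (Rle_dec (v c) MR), (Rle_dec (w c) MR); try discriminate.
  - inversion Hi. split; [tauto|]. intros _. split; auto. split.
    + destruct Req_EM_T, Req_EM_T; try discriminate; tauto.
    + intros d Hd Hvd. pose proof (map_eq_in _ _ _ d H2 Hd) as Hj. unfold info in Hj.
      destruct (Rle_dec (v d) MR); try lra. destruct (Rle_dec (w d) MR); try discriminate.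
      inversion Hj. rewrite rank_lt, rank_lt; auto. rewrite H5, H8. tauto.
  - split; [tauto|]. intros; lra.
Qed.

Lemma key_E : forall q v w, E v w -> key q v = key q w.
Proof.
  intros q v w HE. unfold key. f_equal. apply map_ext_in. intros c Hc. unfold info.
  assert (Hr : rank v c = rank w c -> v c <= MR -> w c <= MR -> v c = w c ->
    (Some (fl (- v c), (if Req_EM_T (fr (- v c)) 0 then true else false), rank v c) =
     Some (fl (- w c), (if Req_EM_T (fr (- w c)) 0 then true else false), rank w c))).
  { intros H1 _ _ H2. rewrite H1, H2. auto. }
  assert (Hrank : v c = w c -> rank v c = rank w c).
  { intro Heq. unfold rank. rewrite Heq. f_equal. apply filter_ext_in. intros d Hd.
    unfold finb. destruct (HE d Hd) as [Hd'|[H1 H2]].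
    - rewrite Hd'. auto.
    - repeat destruct Rle_dec; try lra; auto. }
  destruct (HE c Hc) as [Heq|[H1 H2]].
  - destruct Rle_dec, Rle_dec; try lra; auto.
  - destruct Rle_dec, Rle_dec; try lra; auto.
Qed.

Lemma transfer : forall N q v w, Reach (INR N) q v -> sim v w -> exists v', Reach (INR N) q v' /\ E v' w.
Proof.
  intros N q v w HR Hs.
  set (P := map (fun c => (fr (- v c), fr (- w c))) (filter (finb v) C)).
  assert (HinP : forall p, In p P -> exists c, In c C /\ v c <= MR /\ p = (fr (- v c), fr (- w c))).
  { intros p Hp. unfold P in Hp. apply in_map_iff in Hp. destruct Hp as (c & <- & Hc).
    apply filter_In in Hc. destruct Hc as [Hc Hf]. unfold finb in Hf. destruct Rle_dec; try discriminate.
    exists c; auto. }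
  destruct (psi_exists P) as (psi & Hpsi & Hpt).
  { intros p Hp. destruct (HinP p Hp) as (c & Hc & Hf & ->). simpl.
    pose proof (fr_range (- v c)). pose proof (fr_range (- w c)).
    destruct (Hs c Hc) as [_ H3]. destruct (H3 Hf) as (_ & H4 & _). tauto. }
  { intros p p' Hp Hp'. destruct (HinP p Hp) as (c & Hc & Hf & ->). destruct (HinP p' Hp') as (d & Hd & Hfd & ->).
    simpl. destruct (Hs c Hc) as [_ H3]. destruct (H3 Hf) as (_ & _ & H4). apply H4; auto. }
  destruct (RF_retime psi Hpsi Sigma A _ _ _ _ _ _ HR v0) as (v' & H1 & H2).
  { intro c. unfold v0. replace (0 - 0) with 0 by ring. ring. }
  destruct Hpsi as (Hm & Ha & H0) eqn:Hps.
  assert (HN : psi (INR N) = INR N) by (rewrite INR_IZR_INZ; apply psi_int; auto).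
  rewrite H0, HN in H1. exists v'. split; auto.
  intros c Hc. rewrite H2. destruct (Hs c Hc) as [Hb Hf].
  destruct (Rle_dec (v c) MR).
  - left. destruct (Hf r) as (Hfl & _ & _).
    assert (Hin : In (fr (- v c), fr (- w c)) P).
    { unfold P. apply (in_map (fun c => (fr (- v c), fr (- w c)))). apply filter_In. split; auto. unfold finb. destruct Rle_dec; auto; lra. }
    specialize (Hpt _ Hin (fl (- v c) + Z.of_nat N)%Z). simpl in Hpt.
    rewrite plus_IZR, <- INR_IZR_INZ in Hpt. unfold fr in Hpt.
    replace (IZR (fl (- v c)) + INR N + (- v c - IZR (fl (- v c)))) with (INR N - v c) in Hpt by ring.
    rewrite Hpt, Hfl, HN. ring.
  - right. assert (w c > MR) by (destruct (Rle_dec (w c) MR); [exfalso; tauto|lra]). split; auto.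
    assert (psi (INR N - v c) < psi (INR N - MR)) by (apply Hm; lra).
    unfold MR in *. rewrite !INR_IZR_INZ, <- minus_IZR, psi_int in H3 by auto.
    rewrite minus_IZR, <- !INR_IZR_INZ in H3. lra.
Qed.

Definition Sk (n : nat) kappa := exists q v, Reach (INR n) q v /\ key q v = kappa.
Definition Gr kappa kappa' := exists q w q' w' a, key q w = kappa /\ RF q w (INR a) q' w' (INR (S a)) /\ key q' w' = kappa'.

Lemma Sk_step : forall n kappa', Sk (S n) kappa' <-> exists kappa, Sk n kappa /\ Gr kappa kappa'.
Proof.
  intros n kappa'. split.
  - intros (q' & v' & HR & Hk). destruct (RF_split _ _ _ _ _ _ _ _ HR (INR n)) as (q & v & H1 & H2).
    { split; [apply pos_INR|rewrite S_INR; lra]. }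
    exists (key q v). split. exists q, v; auto. exists q, v, q', v', n. auto.
  - intros (kappa & (q1 & v1 & HR & Hk) & (q & w & q' & w' & a & Hk1 & HRF & Hk2)).
    subst kappa. destruct (key_sim _ _ _ _ (eq_sym Hk1)) as [-> Hs].
    destruct (transfer _ _ _ _ HR Hs) as (v2 & HR2 & HE).
    destruct (RF_E _ _ _ _ _ _ _ _ HRF v2 (INR n - INR a) HE) as (w2 & H1 & H2).
    replace (INR a + (INR n - INR a)) with (INR n) in H1 by ring.
    replace (INR (S a) + (INR n - INR a)) with (INR (S n)) in H1 by (rewrite !S_INR; ring).
    exists q', w2. split. eapply RF_trans; eauto. rewrite <- Hk2. apply key_E; auto.
Qed.

Definition zs := map (fun n => (- Z.of_nat n)%Z) (seq 0 (S (Mn Sigma A))).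
Definition infos : list (option (Z * bool * nat)) :=
  None :: map Some (list_prod (list_prod zs (true :: false :: nil)) (seq 0 (S (length C)))).
Definition keys_all := list_prod (locs Sigma A) (all_lists (length C) infos).

Lemma key_in : forall q v, In q (locs Sigma A) -> (forall c, 0 <= v c) -> In (key q v) keys_all.
Proof.
  intros q v Hq Hv. unfold keys_all, key. apply in_prod; auto. apply in_all_lists.
  rewrite length_map; auto. intros e He. apply in_map_iff in He. destruct He as (c & <- & Hc).
  unfold info. destruct Rle_dec; [|left; auto]. right. apply in_map.
  apply in_prod; [apply in_prod|].
  - unfold zs. apply in_map_iff. exists (Z.to_nat (- fl (- v c))).
    assert (Hlo : (- Z.of_nat (Mn Sigma A) <= fl (- v c))%Z).
    { rewrite <- (fl_unique (- MR) (- Z.of_nat (Mn Sigma A))). apply fl_mono. lra.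
      rewrite opp_IZR, <- INR_IZR_INZ. unfold P1.MR. lra. }
    assert (Hhi : (fl (- v c) <= 0)%Z).
    { rewrite <- (fl_unique 0 0). apply fl_mono. specialize (Hv c); lra. simpl; lra. }
    split. lia. apply in_seq. lia.
  - destruct Req_EM_T; simpl; auto.
  - apply in_seq. split. lia. unfold rank. pose proof (filter_length_le).
    assert (forall (f : clock -> bool) l, (length (filter f l) <= length l)%nat).
    { induction l; simpl; auto. destruct (f a); simpl; lia. }
    specialize (H0 (fun d => finb v d && ltb (fr (- v d)) (fr (- v c))) C). lia.
Qed.

Lemma Sk_in : forall n kappa, Sk n kappa -> In kappa keys_all.
Proof.
  intros n kappa (q & v & HR & <-). destruct (RF_nonneg _ _ _ _ _ _ _ _ HR) as [H1 H2].
  apply q0_in. intro; unfold v0; lra. apply key_in; auto.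
Qed.

Definition code n := map (fun kappa => if excluded_middle_informative (Sk n kappa) then true else false) keys_all.

Lemma periodic : exists i P, (P > 0)%nat /\ forall n t kappa, (i <= n)%nat -> (Sk n kappa <-> Sk (n + t * P) kappa).
Proof.
  destruct (pigeon code (all_lists (length keys_all) (true :: false :: nil))) as (i & j & Hij & Hc).
  { intro n. apply in_all_lists. unfold code; rewrite length_map; auto.
    intros e _. destruct e; simpl; auto. }
  assert (Hb : forall kappa, Sk i kappa <-> Sk j kappa).
  { intro kappa. destruct (classic (In kappa keys_all)) as [Hin|Hout].
    - pose proof (map_eq_in _ _ _ kappa Hc Hin) as H. simpl in H.
      destruct excluded_middle_informative, excluded_middle_informative; try discriminate; tauto.
    - split; intro H; exfalso; apply Hout; eapply Sk_in; eauto. }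
  assert (Hm : forall m kappa, Sk (i + m) kappa <-> Sk (j + m) kappa).
  { induction m; intro kappa. rewrite !Nat.add_0_r; auto.
    rewrite !Nat.add_succ_r, !Sk_step. split; intros (k & H1 & H2); exists k; split; auto; apply IHm; auto. }
  exists i, (j - i)%nat. split. lia.
  intros n t kappa Hn. induction t. rewrite Nat.mul_0_l, Nat.add_0_r; tauto.
  rewrite IHt. replace (n + S t * (j - i))%nat with (j + (n + t * (j - i) - i))%nat by nia.
  replace (n + t * (j - i))%nat with (i + (n + t * (j - i) - i))%nat at 1 by nia. apply Hm.
Qed.

End S4.

End P4.
Import P4.

Theorem theorem2 (Sigma : Type) (A : eNTA Sigma) :
  exists (tper : R) (L : nat), tper > 0 /\ (L > 0)%nat /\
    forall (pre : list (R * Sigma)) (tr : R) (ar : Sigma) (suf : list (R * Sigma)),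
      in_lang A (pre ++ (tr, ar) :: suf) ->
      tr > tper ->
      forall k : Z,
        let K := IZR (Z.of_nat L * k) in
        tr + K > tper ->
        exists pre' : list (R * Sigma),
          in_lang A (pre' ++ shift_trace K ((tr, ar) :: suf)).
Proof.
  destruct (periodic Sigma A) as (i & P & HP & Hper).
  exists (INR i + 1), P. split. pose proof (pos_INR i); lra. split; auto.
  intros pre tr ar suf (steps & Hrun & Hobs) Htr k K HK.
  pose proof (fl_spec tr) as Hfl.
  set (z := fl tr) in *.
  assert (Hz : (Z.of_nat i < z)%Z).
  { apply lt_IZR. rewrite <- INR_IZR_INZ. lra. }
  assert (Hz' : (Z.of_nat i < z + Z.of_nat P * k)%Z).
  { apply lt_IZR. rewrite <- INR_IZR_INZ, plus_IZR. unfold K in HK. lra. }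
  set (N := Z.to_nat z). set (N' := Z.to_nat (z + Z.of_nat P * k)).
  assert (HN : INR N = IZR z) by (unfold N; rewrite INR_IZR_INZ, Z2Nat.id; auto; lia).
  assert (HN' : INR N' = INR N + K).
  { unfold N', K. rewrite INR_IZR_INZ, Z2Nat.id by lia. rewrite plus_IZR, HN. auto. }
  destruct (run_cut Sigma A tr ar suf steps (q0 A) (fun _ => 0) 0 pre (INR N) Hrun Hobs) as
    (q & v & rest & mid & HR & Hrest & Hobs').
  { rewrite HN. split; [apply IZR_le; lia | lra]. }
  assert (HS : Sk Sigma A N (key Sigma A q v)) by (exists q, v; split; auto).
  assert (HS' : Sk Sigma A N' (key Sigma A q v)).
  { destruct (Z_le_gt_dec 0 k).
    - replace N' with (N + Z.to_nat k * P)%nat. apply Hper; auto. unfold N; lia.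
      unfold N, N'. lia.
    - apply (Hper N' (Z.to_nat (- k)) (key Sigma A q v)). unfold N'; lia.
      replace (N' + Z.to_nat (- k) * P)%nat with N; auto. unfold N, N'. lia. }
  destruct HS' as (q1 & v1 & HR1 & Hk).
  destruct (key_sim Sigma A _ _ _ _ Hk) as [-> Hs].
  destruct (transfer Sigma A _ _ _ _ HR1 Hs) as (v2 & HR2 & HE).
  pose proof (run_E Sigma A rest q v2 v HE Hrest) as Hrest2.
  destruct (RF_run Sigma A _ _ _ _ _ _ HR2 rest Hrest2) as (steps2 & pre0 & Hr2 & Ho2).
  exists (pre0 ++ shift_trace K mid). exists steps2. split; auto.
  rewrite Ho2, HN', obs_shift. transitivity (pre0 ++ shift_trace K (mid ++ (tr,ar)::suf)). do 2 f_equal; exact Hobs'.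
  unfold shift_trace. rewrite map_app, app_assoc. auto.
Qed.
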